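(* (1) For all $x,y\in(0,\infty)$, $$\cosh(\sqrt{xy})\le\sqrt{\cosh x\cosh y}\le\cosh\Big(\sqrt{(x^2+y^2)/2}\Big)\le\tfrac12(\cosh x+\cosh y),$$ with equality if and only if $x=y$. (2) For $0<R<6$ and all $x,y\in(0,\sqrt R)$, $$\tfrac12(\cosh x+\cosh y)\le\cosh\Big(\sqrt{R-\sqrt{(R-x^2)(R-y^2)}}\Big),$$ with equality if and only if $x=y$. (3) For all $x,y\in(0,\infty)$, $$\frac{\sinh\sqrt{xy}}{\sqrt{xy}}\le\sqrt{\frac{\sinh x}{x}\cdot\frac{\sinh y}{y}}\le\frac{\sinh\sqrt{\frac12(x^2+y^2)}}{\sqrt{\frac12(x^2+y^2)}}\le\frac12\Big(\frac{\sinh x}{x}+\frac{\sinh y}{y}\Big),$$ with equality if and only if $x=y$. (4) For $0<R<10$ and all $x,y\in(0,\sqrt R)$, writing $s=\sqrt{R-\sqrt{(R-x^2)(R-y^2)}}$, $$\frac12\Big(\frac{\sinh x}{x}+\frac{\sinh y}{y}\Big)\le\frac{\sinh s}{s},$$ with equality if and only if $x=y$. *)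

(* Defs.v *)
From Stdlib Require Export Reals.
Open Scope R_scope.

Definition sinhc (x : R) : R := sinh x / x.

Definition Rmean (Rp x y : R) : R :=
  sqrt (Rp - sqrt ((Rp - x ^ 2) * (Rp - y ^ 2))).

(* Main.v *)
Require Import Defs.
From Stdlib Require Import Reals Lra Psatz.
From Stdlib Require Import Reals Lra Psatz.
From Coquelicot Require Import Coquelicot.
Open Scope R_scope.

Lemma incr (f df : R -> R) a b : a < b ->
  (forall c, a <= c <= b -> is_derive f c (df c)) ->
  (forall c, a < c < b -> 0 < df c) -> f a < f b.
Proof.
intros ab Hd Hp.
destruct (MVT_cor2 f df a b ab) as [c [E Hc]].
{ intros c Hc; apply is_derive_Reals; auto. }
assert (0 < df c) by auto. nra.
Qed.

Lemma pos0 (f df : R -> R) x : 0 < x -> f 0 = 0 ->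
  (forall c, 0 <= c <= x -> is_derive f c (df c)) ->
  (forall c, 0 < c < x -> 0 < df c) -> 0 < f x.
Proof. intros; rewrite <- H0; apply (incr f df); auto. Qed.

Lemma cosh_pos x : 0 < cosh x.
Proof. unfold cosh; generalize (exp_pos x) (exp_pos (-x)); lra. Qed.

Lemma sinh_pos x : 0 < x -> 0 < sinh x.
Proof. intros; rewrite <- sinh_0; apply sinh_lt; auto. Qed.

Ltac hyp_simpl := unfold cosh, sinh; repeat (rewrite ?exp_plus, ?exp_Ropp, ?Ropp_plus_distr, ?Ropp_involutive);
  try unfold Rminus; repeat (rewrite ?exp_plus, ?exp_Ropp, ?Ropp_plus_distr, ?Ropp_involutive).

Lemma cosh_double g : 2 * cosh g ^ 2 = cosh (2 * g) + 1.
Proof. replace (2*g) with (g+g) by ring. hyp_simpl.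
generalize (exp_pos g); intro. field. lra. Qed.

Lemma sinh_double g : 2 * sinh g ^ 2 = cosh (2 * g) - 1.
Proof. replace (2*g) with (g+g) by ring. hyp_simpl.
generalize (exp_pos g); intro. field. lra. Qed.

Lemma cosh_prod x y : 2 * cosh x * cosh y = cosh (x + y) + cosh (x - y).
Proof. hyp_simpl. generalize (exp_pos x) (exp_pos y); intros. field. lra. Qed.

Lemma sinh_prod x y : 2 * sinh x * sinh y = cosh (x + y) - cosh (x - y).
Proof. hyp_simpl. generalize (exp_pos x) (exp_pos y); intros. field. lra. Qed.

Lemma cosh_even x : cosh (- x) = cosh x.
Proof. hyp_simpl. generalize (exp_pos x); intros. field. lra. Qed.

Lemma csq x : cosh x ^ 2 - sinh x ^ 2 = 1.
Proof. hyp_simpl. generalize (exp_pos x); intros. field. lra. Qed.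

Lemma d_cosh x : is_derive cosh x (sinh x).
Proof. apply is_derive_Reals, derivable_pt_lim_cosh. Qed.
Lemma d_sinh x : is_derive sinh x (cosh x).
Proof. apply is_derive_Reals, derivable_pt_lim_sinh. Qed.

Ltac dtac := unfold cosh, sinh; auto_derive; try exact I; try (unfold cosh, sinh; field).

Lemma cosh_strict a b : 0 <= a < b -> cosh a < cosh b.
Proof. intros [Ha Hb]. apply (incr cosh sinh); auto.
intros; apply d_cosh. intros; apply sinh_pos; lra. Qed.

Lemma cosh_mono a b : 0 <= a <= b -> cosh a <= cosh b.
Proof. intros [Ha Hb]. destruct (Req_dec a b). subst; lra. left; apply cosh_strict; lra. Qed.

Lemma cosh_ge1 x : 1 <= cosh x /\ (x <> 0 -> 1 < cosh x).
Proof. rewrite <- cosh_0.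
destruct (Rle_or_lt 0 x).
split. apply cosh_mono; lra. intros; apply cosh_strict; lra.
rewrite <- (cosh_even x). split. apply cosh_mono; lra. intros; apply cosh_strict; lra. Qed.

Lemma E1_pos x : 0 < x -> 0 < x * cosh x - sinh x.
Proof. intro. apply (pos0 (fun x => x * cosh x - sinh x) (fun x => x * sinh x)); auto.
rewrite sinh_0; ring. intros; dtac.
intros; generalize (sinh_pos c); nra. Qed.

Lemma d_hs (h k u : R -> R) du t : (forall X, 0 < X -> is_derive h X (X * k X)) ->
  is_derive u t du -> 0 < u t ->
  is_derive (fun t => h (sqrt (u t))) t (du * k (sqrt (u t)) / 2).
Proof.
intros Hh Hu Hp.
assert (Hs : 0 < sqrt (u t)) by (apply sqrt_lt_R0; auto).
replace (du * k (sqrt (u t)) / 2) with (scal (du / (2 * sqrt (u t))) (sqrt (u t) * k (sqrt (u t)))).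
apply (is_derive_comp h (fun t => sqrt (u t))). apply Hh; auto.
apply is_derive_sqrt; auto.
unfold scal; simpl; unfold mult; simpl. field. lra.
Qed.

Lemma sq_sqrt a : 0 <= a -> sqrt a ^ 2 = a.
Proof. intros; simpl; rewrite Rmult_1_r; apply sqrt_sqrt; auto. Qed.

Lemma convA_lt (h k : R -> R) : (forall X, 0 < X -> is_derive h X (X * k X)) ->
  (forall a b, 0 < a < b -> k a < k b) ->
  forall x y, 0 < y < x -> 2 * h (sqrt ((x^2+y^2)/2)) < h x + h y.
Proof.
intros Hh Hk x y [Hy Hxy].
set (M := (x^2+y^2)/2). set (d0 := (x^2-y^2)/2).
assert (Hd0 : 0 < d0) by (unfold d0; nra).
assert (E1 : M + d0 = x^2) by (unfold M, d0; field).
assert (E2 : M - d0 = y^2) by (unfold M, d0; field).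
assert (HM : y^2 <= M - 0) by (unfold M; nra).
pose (f := fun d => h (sqrt (M + d)) + h (sqrt (M - d))).
pose (df := fun d => 1 * k (sqrt (M + d)) / 2 + (-1) * k (sqrt (M - d)) / 2).
assert (f 0 < f d0).
{ apply (incr f df); auto.
  - intros c Hc. unfold f, df. apply @is_derive_plus.
    + apply (d_hs h k (fun d => M + d)); auto. auto_derive; auto. nra.
    + apply (d_hs h k (fun d => M - d)); auto. auto_derive; auto. nra.
  - intros c Hc. unfold df. assert (k (sqrt (M - c)) < k (sqrt (M + c))).
    apply Hk. split. apply sqrt_lt_R0; nra. apply sqrt_lt_1; nra. lra. }
unfold f in H. rewrite E1, E2, Rplus_0_r, Rminus_0_r, !sqrt_pow2 in H; lra.
Qed.

Lemma convC_lt (h k : R -> R) : (forall X, 0 < X -> is_derive h X (X * k X)) ->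
  (forall X, 0 < X -> 0 < h X) ->
  (forall a b, 0 < a < b -> k b / h b < k a / h a) ->
  forall x y, 0 < y < x -> h x * h y < h (sqrt ((x^2+y^2)/2)) ^ 2.
Proof.
intros Hh Hpos Hk x y [Hy Hxy].
set (M := (x^2+y^2)/2). set (d0 := (x^2-y^2)/2).
assert (Hd0 : 0 < d0) by (unfold d0; nra).
assert (E1 : M + d0 = x^2) by (unfold M, d0; field).
assert (E2 : M - d0 = y^2) by (unfold M, d0; field).
pose (f := fun d => - (h (sqrt (M + d)) * h (sqrt (M - d)))).
pose (df := fun d => - (1 * k (sqrt (M + d)) / 2 * h (sqrt (M - d)) + h (sqrt (M + d)) * ((-1) * k (sqrt (M - d)) / 2))).
assert (f 0 < f d0).
{ apply (incr f df); auto.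
  - intros c Hc. unfold f, df. apply @is_derive_opp. apply (is_derive_mult (fun d => h (sqrt (M+d))) (fun d => h (sqrt (M - d)))).
    + apply (d_hs h k (fun d => M + d)); auto. auto_derive; auto. nra.
    + apply (d_hs h k (fun d => M - d)); auto. auto_derive; auto. nra.
    + intros; apply Rmult_comm.
  - intros c Hc. unfold df.
    assert (0 < sqrt (M - c)) by (apply sqrt_lt_R0; nra).
    assert (sqrt (M - c) < sqrt (M + c)) by (apply sqrt_lt_1; nra).
    assert (k (sqrt (M + c)) / h (sqrt (M + c)) < k (sqrt (M - c)) / h (sqrt (M - c))).
    apply Hk; lra.
    assert (0 < h (sqrt (M - c))) by auto.
    assert (0 < h (sqrt (M + c))) by (apply Hpos; lra).
    unfold Rdiv in H1.
    apply (Rmult_lt_compat_r (h (sqrt (M + c)) * h (sqrt (M - c)))) in H1; [|nra].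
    replace (k (sqrt (M + c)) * / h (sqrt (M + c)) * (h (sqrt (M + c)) * h (sqrt (M - c))))
     with (k (sqrt (M + c)) * h (sqrt (M - c))) in H1 by (field; lra).
    replace (k (sqrt (M - c)) * / h (sqrt (M - c)) * (h (sqrt (M + c)) * h (sqrt (M - c))))
     with (k (sqrt (M - c)) * h (sqrt (M + c))) in H1 by (field; lra).
    lra. }
unfold f in H. rewrite E1, E2, Rplus_0_r, Rminus_0_r, !sqrt_pow2 in H; lra.
Qed.

Lemma convB_lt (h k : R -> R) Rp : (forall X, 0 < X -> is_derive h X (X * k X)) ->
  (forall a b, 0 < a < b -> b < sqrt Rp -> (Rp - b^2) * k b < (Rp - a^2) * k a) ->
  forall x y, 0 < x < y -> y < sqrt Rp -> h x + h y < 2 * h (Rmean Rp x y).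
Proof.
intros Hh Hk x y [Hx Hxy] HyR.
assert (HR : 0 < Rp). { destruct (Rle_or_lt Rp 0). rewrite sqrt_neg_0 in HyR; lra. auto. }
assert (Hy2 : y^2 < Rp). { rewrite <- (sq_sqrt Rp) by lra. nra. }
set (u := Rp - x^2). set (v := Rp - y^2).
assert (Hv : 0 < v) by (unfold v; lra).
assert (Hvu : v < u) by (unfold u, v; nra).
assert (Hu : u < Rp) by (unfold u; nra).
set (g := sqrt (u * v)).
assert (Hg2 : g ^ 2 = u * v) by (unfold g; apply sq_sqrt; nra).
assert (Hg : 0 < g) by (unfold g; apply sqrt_lt_R0; nra).
assert (Hvg : v < g) by nra.
assert (Hgu : g < u) by nra.
pose (f := fun p => - (h (sqrt (Rp - p)) + h (sqrt (Rp - g^2 / p)))).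
pose (df := fun p => - ((-1) * k (sqrt (Rp - p)) / 2 + (g^2 / p^2) * k (sqrt (Rp - g^2/p)) / 2)).
assert (f g < f u).
{ apply (incr f df); auto.
  - intros c Hc. unfold f, df. apply @is_derive_opp. apply @is_derive_plus.
    + apply (d_hs h k (fun d => Rp - d)); auto. auto_derive; auto. lra.
    + apply (d_hs h k (fun d => Rp - g^2/d)); auto. auto_derive. lra. field. lra.
      assert (g^2/c <= g) by (apply Rmult_le_reg_r with c; [lra| replace (g^2/c*c) with (g^2) by (field; lra); nra]).
      lra.
  - intros c Hc. unfold df.
    assert (Hc1 : g^2/c < c) by (apply Rmult_lt_reg_r with c; [lra| replace (g^2/c*c) with (g^2) by (field; lra); nra]).
    assert (Hc2 : 0 < g^2/c) by (apply Rdiv_lt_0_compat; nra).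
    set (X1 := sqrt (Rp - c)). set (X2 := sqrt (Rp - g^2/c)).
    assert (HX1 : X1 ^ 2 = Rp - c) by (apply sq_sqrt; lra).
    assert (HX2 : X2 ^ 2 = Rp - g^2/c) by (apply sq_sqrt; lra).
    assert (0 < X1) by (apply sqrt_lt_R0; lra).
    assert (X1 < X2) by (apply sqrt_lt_1; lra).
    assert (X2 < sqrt Rp) by (apply sqrt_lt_1; lra).
    pose proof (Hk X1 X2 (conj H H0) H1) as K.
    rewrite HX1, HX2 in K. replace (Rp - (Rp - c)) with c in K by ring.
    replace (Rp - (Rp - g^2/c)) with (g^2/c) in K by ring.
    replace (g ^ 2 / c ^ 2 * k X2) with (g^2/c * k X2 / c) by (field; lra).
    assert (g ^ 2 / c * k X2 / c < k X1).
    { apply Rmult_lt_reg_r with c. lra. replace (g ^ 2 / c * k X2 / c * c) with (g^2/c * k X2) by (field; lra). lra. }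
    lra. }
unfold f in H.
replace (g^2/g) with g in H by (field; lra).
replace (g^2/u) with v in H by (rewrite Hg2; field; lra).
unfold u, v in H. replace (Rp - (Rp - x^2)) with (x^2) in H by ring.
replace (Rp - (Rp - y^2)) with (y^2) in H by ring.
rewrite !sqrt_pow2 in H by lra.
unfold Rmean. fold u v g. lra.
Qed.

Lemma d_cosh_k X : 0 < X -> is_derive cosh X (X * sinhc X).
Proof. intros. replace (X * sinhc X) with (sinh X) by (unfold sinhc; field; lra). apply d_cosh. Qed.

Lemma d_sinhc X : 0 < X -> is_derive sinhc X (X * ((X * cosh X - sinh X) / X^3)).
Proof. intros. unfold sinhc. dtac. lra. lra. Qed.

Lemma sinhc_pos X : 0 < X -> 0 < sinhc X.
Proof. intros; unfold sinhc; apply Rdiv_lt_0_compat; auto; apply sinh_pos; auto. Qed.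

Lemma sinhc_incr a b : 0 < a < b -> sinhc a < sinhc b.
Proof. intros [Ha Hb]. apply (incr sinhc (fun X => (X * cosh X - sinh X) / X^2)); auto.
intros c Hc. unfold sinhc. dtac. lra. lra.
intros c Hc. apply Rdiv_lt_0_compat. apply E1_pos; lra. nra. Qed.

Lemma P_pos X : 0 < X -> 0 < X^2 * sinh X + X^3 * cosh X + 6 * sinh X - 6 * X * cosh X.
Proof. intros. apply (pos0 (fun X => X^2 * sinh X + X^3 * cosh X + 6 * sinh X - 6 * X * cosh X)
  (fun X => X^3 * sinh X + 4 * X^2 * cosh X - 4 * X * sinh X)); auto.
rewrite sinh_0; ring. intros; dtac.
intros. generalize (E1_pos c) (sinh_pos c); intros.
replace (c ^ 3 * sinh c + 4 * c ^ 2 * cosh c - 4 * c * sinh c) with (c * (c^2 * sinh c + 4 * (c * cosh c - sinh c))) by ring.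
apply Rmult_lt_0_compat. lra. assert (0 < c^2 * sinh c) by (apply Rmult_lt_0_compat; nra). nra. Qed.

Lemma K_decr Rp a b : Rp < 6 -> 0 < a < b -> b < sqrt Rp -> (Rp - b^2) * sinhc b < (Rp - a^2) * sinhc a.
Proof. intros HR [Ha Hab] Hb.
assert (HR0 : 0 < Rp). { destruct (Rle_or_lt Rp 0). rewrite sqrt_neg_0 in Hb; lra. auto. }
assert (Hb2 : b^2 < Rp). { rewrite <- (sq_sqrt Rp) by lra. nra. }
apply Ropp_lt_cancel.
apply (incr (fun X => - ((Rp - X^2) * sinhc X)) (fun X => - (-2 * X * sinhc X + (Rp - X^2) * ((X * cosh X - sinh X)/X^2)))); auto.
intros c Hc. unfold sinhc. dtac. lra. lra.
intros c Hc. generalize (P_pos c) (E1_pos c); intros.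
assert (c * sinhc c = sinh c) by (unfold sinhc; field; lra).
assert ((Rp - c^2) * ((c * cosh c - sinh c)/c^2) < 2 * sinh c).
{ apply Rmult_lt_reg_r with (c^2). nra.
  replace ((Rp - c^2) * ((c * cosh c - sinh c)/c^2) * c^2) with ((Rp - c^2) * (c * cosh c - sinh c)) by (field; lra).
  assert (0 < c * cosh c - sinh c) by (apply E1_pos; lra).
  assert (0 < c ^ 2 * sinh c + c ^ 3 * cosh c + 6 * sinh c - 6 * c * cosh c) by (apply P_pos; lra).
  nra. }
nra.
Qed.

Lemma N_pos X : 0 < X -> 0 < X^2 * sinh X - 3 * X * cosh X + 3 * sinh X.
Proof. intros. apply (pos0 (fun X => X^2 * sinh X - 3 * X * cosh X + 3 * sinh X)
  (fun X => X * (X * cosh X - sinh X))); auto.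
rewrite sinh_0; ring. intros; dtac.
intros. generalize (E1_pos c); intros. apply Rmult_lt_0_compat; lra. Qed.

Lemma Q2_pos X : 0 < X -> 0 < X^2 * sinh X + 6 * X * cosh X - 6 * sinh X.
Proof. intros. apply (pos0 (fun X => X^2 * sinh X + 6 * X * cosh X - 6 * sinh X)
  (fun X => X^2 * cosh X + 8 * X * sinh X)); auto.
rewrite sinh_0; ring. intros; dtac.
intros. generalize (sinh_pos c) (cosh_pos c); intros.
assert (0 < c^2 * cosh c) by (apply Rmult_lt_0_compat; nra).
assert (0 < c * sinh c) by (apply Rmult_lt_0_compat; nra). lra. Qed.

Lemma Q1_pos X : 0 < X -> 0 < X^3 * cosh X + 3 * X^2 * sinh X - 12 * X * cosh X + 12 * sinh X.
Proof. intros. apply (pos0 (fun X => X^3 * cosh X + 3 * X^2 * sinh X - 12 * X * cosh X + 12 * sinh X)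
  (fun X => X * (X^2 * sinh X + 6 * X * cosh X - 6 * sinh X))); auto.
rewrite sinh_0; ring. intros; dtac.
intros. generalize (Q2_pos c); intros. apply Rmult_lt_0_compat; lra. Qed.

Lemma Q_pos X : 0 < X -> 0 < X^4 * sinh X - X^3 * cosh X - 9 * X^2 * sinh X + 30 * X * cosh X - 30 * sinh X.
Proof. intros. apply (pos0 (fun X => X^4 * sinh X - X^3 * cosh X - 9 * X^2 * sinh X + 30 * X * cosh X - 30 * sinh X)
  (fun X => X * (X^3 * cosh X + 3 * X^2 * sinh X - 12 * X * cosh X + 12 * sinh X))); auto.
rewrite sinh_0; ring. intros; dtac.
intros. generalize (Q1_pos c); intros. apply Rmult_lt_0_compat; lra. Qed.

Definition qf X := (X * cosh X - sinh X) / X^3.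

Lemma q_incr a b : 0 < a < b -> qf a < qf b.
Proof. intros [Ha Hb]. apply (incr qf (fun X => (X^2 * sinh X - 3 * X * cosh X + 3 * sinh X) / X^4)); auto.
intros c Hc. unfold qf. dtac; try lra; repeat (apply Rmult_integral_contrapositive_currified); lra.
intros c Hc. apply Rdiv_lt_0_compat. apply N_pos; lra. apply pow_lt; lra. Qed.

Lemma L_decr Rp a b : Rp < 10 -> 0 < a < b -> b < sqrt Rp -> (Rp - b^2) * qf b < (Rp - a^2) * qf a.
Proof. intros HR [Ha Hab] Hb.
assert (HR0 : 0 < Rp). { destruct (Rle_or_lt Rp 0). rewrite sqrt_neg_0 in Hb; lra. auto. }
assert (Hb2 : b^2 < Rp). { rewrite <- (sq_sqrt Rp) by lra. nra. }
apply Ropp_lt_cancel.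
apply (incr (fun X => - ((Rp - X^2) * qf X)) (fun X => - (-2 * X * qf X + (Rp - X^2) * ((X^2 * sinh X - 3 * X * cosh X + 3 * sinh X) / X^4)))); auto.
intros c Hc. unfold qf. dtac; try lra; repeat (apply Rmult_integral_contrapositive_currified); lra.
intros c Hc. generalize (Q_pos c) (N_pos c) (E1_pos c); intros.
assert (c * qf c = (c * cosh c - sinh c) / c^2) by (unfold qf; field; lra).
assert ((Rp - c^2) * ((c ^ 2 * sinh c - 3 * c * cosh c + 3 * sinh c) / c^4) < 2 * ((c * cosh c - sinh c) / c^2)).
{ apply Rmult_lt_reg_r with (c^4). nra.
  replace ((Rp - c^2) * ((c ^ 2 * sinh c - 3 * c * cosh c + 3 * sinh c) / c^4) * c^4) with ((Rp - c^2) * (c ^ 2 * sinh c - 3 * c * cosh c + 3 * sinh c)) by (field; lra).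
  replace (2 * ((c * cosh c - sinh c) / c^2) * c^4) with (2 * c^2 * (c * cosh c - sinh c)) by (field; lra).
  assert (0 < c ^ 2 * sinh c - 3 * c * cosh c + 3 * sinh c) by (apply N_pos; lra).
  assert (0 < c ^ 4 * sinh c - c ^ 3 * cosh c - 9 * c ^ 2 * sinh c + 30 * c * cosh c - 30 * sinh c) by (apply Q_pos; lra).
  nra. }
nra.
Qed.

Lemma V1_pos X : 0 < X -> 0 < 2 * X + X * (sinh X ^ 2 + cosh X ^ 2) - 3 * sinh X * cosh X.
Proof. intros. apply (pos0 (fun X => 2 * X + X * (sinh X ^ 2 + cosh X ^ 2) - 3 * sinh X * cosh X)
  (fun X => 2 + 4 * X * sinh X * cosh X - 2 * (sinh X ^ 2 + cosh X ^ 2))); auto.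
rewrite sinh_0, cosh_0; ring. intros; dtac.
intros. generalize (E1_pos c) (sinh_pos c) (csq c); intros.
replace (2 + 4 * c * sinh c * cosh c - 2 * (sinh c ^ 2 + cosh c ^ 2)) with (4 * sinh c * (c * cosh c - sinh c)) by nra.
apply Rmult_lt_0_compat; lra. Qed.

Lemma V_pos X : 0 < X -> 0 < X^2 + X * cosh X * sinh X - 2 * sinh X ^ 2.
Proof. intros. apply (pos0 (fun X => X^2 + X * cosh X * sinh X - 2 * sinh X ^ 2)
  (fun X => 2 * X + X * (sinh X ^ 2 + cosh X ^ 2) - 3 * sinh X * cosh X)); auto.
rewrite sinh_0; ring. intros; dtac.
intros. apply V1_pos; lra. Qed.

Lemma rho_decr a b : 0 < a < b -> qf b / sinhc b < qf a / sinhc a.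
Proof. intros [Ha Hb].
assert (E : forall X, 0 < X -> qf X / sinhc X = (X * cosh X - sinh X) / (X^2 * sinh X)).
{ intros. unfold qf, sinhc. generalize (sinh_pos X H); intro. field. lra. }
rewrite E, E by lra. apply Ropp_lt_cancel.
apply (incr (fun X => - ((X * cosh X - sinh X) / (X^2 * sinh X))) (fun X => (X^2 + X * cosh X * sinh X - 2 * sinh X ^ 2) / (X^3 * sinh X ^ 2))); auto.
intros c Hc. generalize (sinh_pos c); intro Hs. assert (Hs' : 0 < sinh c) by (apply Hs; lra).
unfold sinh in Hs'. assert (Hne : exp c + - exp (- c) <> 0) by lra.
assert (Hne2 : exp c - exp (- c) <> 0) by lra.
unfold cosh, sinh; auto_derive.
repeat apply Rmult_integral_contrapositive_currified; try lra.
change RinvImpl.Rinv with Rinv. rewrite !exp_Ropp in *. generalize (exp_pos c); intro.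
field. repeat split; try lra. intro HH. assert (HH2 : exp c * (exp c - / exp c) = 0) by (rewrite <- HH; field; lra). nra.
intros c Hc. generalize (sinh_pos c) (V_pos c); intros.
apply Rdiv_lt_0_compat. apply H0; lra.
apply Rmult_lt_0_compat. apply pow_lt; lra. apply pow_lt; apply H; lra.
Qed.

Lemma lemL_pos a b : 0 < a -> 0 < b -> cosh a + cosh b < cosh (sqrt (a^2 + b^2)) + 1.
Proof. intros Ha Hb.
pose (f := fun t => cosh (sqrt (a^2 + t^2)) - cosh t).
pose (df := fun t => 2 * t * sinhc (sqrt (a^2 + t^2)) / 2 - sinh t).
assert (f 0 < f b).
{ apply (incr f df); auto.
  - intros c Hc. unfold f, df. apply @is_derive_minus.
    + apply (d_hs cosh sinhc (fun t => a^2 + t^2)); auto. apply d_cosh_k. auto_derive; auto. ring. nra.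
    + apply d_cosh.
  - intros c Hc. unfold df.
    assert (c < sqrt (a^2 + c^2)). { rewrite <- (sqrt_pow2 c) at 1 by lra. apply sqrt_lt_1; nra. }
    assert (sinhc c < sinhc (sqrt (a^2 + c^2))) by (apply sinhc_incr; lra).
    assert (sinh c = c * sinhc c) by (unfold sinhc; field; lra).
    nra. }
unfold f in H. replace (a^2 + 0^2) with (a^2) in H by ring. rewrite sqrt_pow2, cosh_0 in H by lra. lra.
Qed.

Lemma lemL a b : 0 < a -> b <> 0 -> cosh a + cosh b < cosh (sqrt (a^2 + b^2)) + 1.
Proof. intros. destruct (Rle_or_lt 0 b). apply lemL_pos; lra.
rewrite <- (cosh_even b). replace (b^2) with ((-b)^2) by ring. apply lemL_pos; lra. Qed.

Lemma sqrt_lt_of_sq a B : 0 < a -> a^2 < B -> a < sqrt B.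
Proof. intros. rewrite <- (sqrt_pow2 a) by lra. apply sqrt_lt_1; nra. Qed.

Lemma sqrt_gt_of_sq a B : 0 < a -> 0 <= B -> B < a^2 -> sqrt B < a.
Proof. intros. rewrite <- (sqrt_pow2 a) by lra. apply sqrt_lt_1; nra. Qed.

Lemma wrap (A B x y : R) : (x <> y -> A < B) -> (x = y -> A = B) -> A <= B /\ (A = B <-> x = y).
Proof. intros H1 H2. destruct (Req_dec x y).
- rewrite (H2 H). split. lra. tauto.
- specialize (H1 H). split. lra. split; intro; [lra| contradiction]. Qed.

Lemma gm_eq x : 0 < x -> sqrt (x * x) = x.
Proof. intros; apply sqrt_square; lra. Qed.

Lemma qm_eq x : 0 < x -> sqrt ((x^2 + x^2)/2) = x.
Proof. intros. replace ((x^2+x^2)/2) with (x^2) by field. apply sqrt_pow2; lra. Qed.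

Lemma rmean_eq Rp x : 0 < x < sqrt Rp -> Rmean Rp x x = x.
Proof. intros [Hx HR].
assert (HR0 : 0 < Rp). { destruct (Rle_or_lt Rp 0). rewrite sqrt_neg_0 in HR; lra. auto. }
assert (x^2 < Rp). { rewrite <- (sq_sqrt Rp) by lra. nra. }
unfold Rmean. rewrite sqrt_square by lra. replace (Rp - (Rp - x^2)) with (x^2) by ring.
apply sqrt_pow2; lra. Qed.

Lemma rmean_sym Rp x y : Rmean Rp x y = Rmean Rp y x.
Proof. unfold Rmean. rewrite (Rmult_comm (Rp - x^2)). reflexivity. Qed.

Lemma qm_sym x y : sqrt ((x^2 + y^2)/2) = sqrt ((y^2+x^2)/2).
Proof. rewrite (Rplus_comm (x^2)). reflexivity. Qed.

Lemma P1a x y : 0 < x -> 0 < y -> x <> y -> cosh (sqrt (x * y)) < sqrt (cosh x * cosh y).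
Proof. intros Hx Hy Hxy. set (g := sqrt (x*y)).
assert (Hg : 0 < g) by (apply sqrt_lt_R0; nra).
assert (Hg2 : g^2 = x*y) by (apply sq_sqrt; nra).
assert (2*g <= x+y) by nra.
assert (cosh (2*g) <= cosh (x+y)) by (apply cosh_mono; lra).
assert (1 < cosh (x-y)) by (apply cosh_ge1; lra).
apply sqrt_lt_of_sq. apply cosh_pos.
generalize (cosh_double g) (cosh_prod x y); intros. nra. Qed.

Lemma P1b x y : 0 < x -> 0 < y -> x <> y -> sqrt (cosh x * cosh y) < cosh (sqrt ((x^2+y^2)/2)).
Proof. intros Hx Hy Hxy. set (m := sqrt ((x^2+y^2)/2)).
assert (Hm2 : m^2 = (x^2+y^2)/2) by (apply sq_sqrt; nra).
assert (Hm : 0 < m) by (apply sqrt_lt_R0; nra).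
pose proof (lemL (x+y) (x-y)) as L.
replace ((x+y)^2 + (x-y)^2) with ((2*m)^2) in L by nra.
rewrite sqrt_pow2 in L by lra.
assert (cosh (x+y) + cosh (x-y) < cosh (2*m) + 1) by (apply L; lra).
apply sqrt_gt_of_sq. apply cosh_pos. generalize (cosh_pos x) (cosh_pos y); nra.
generalize (cosh_double m) (cosh_prod x y); intros. nra. Qed.

Lemma P1c x y : 0 < x -> 0 < y -> x <> y -> cosh (sqrt ((x^2+y^2)/2)) < (cosh x + cosh y)/2.
Proof. intros Hx Hy Hxy. destruct (Rle_or_lt x y).
- rewrite qm_sym. assert (2 * cosh (sqrt ((y^2+x^2)/2)) < cosh y + cosh x).
  apply (convA_lt cosh sinhc). apply d_cosh_k. apply sinhc_incr. lra. lra.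
- assert (2 * cosh (sqrt ((x^2+y^2)/2)) < cosh x + cosh y).
  apply (convA_lt cosh sinhc). apply d_cosh_k. apply sinhc_incr. lra. lra. Qed.

Lemma P2 Rp x y : Rp < 6 -> 0 < x < sqrt Rp -> 0 < y < sqrt Rp -> x <> y ->
  (cosh x + cosh y) / 2 < cosh (Rmean Rp x y).
Proof. intros HR Hx Hy Hxy. destruct (Rle_or_lt x y).
- assert (cosh x + cosh y < 2 * cosh (Rmean Rp x y)).
  apply (convB_lt cosh sinhc). apply d_cosh_k. intros; apply K_decr; auto. lra. lra. lra.
- rewrite rmean_sym. assert (cosh y + cosh x < 2 * cosh (Rmean Rp y x)).
  apply (convB_lt cosh sinhc). apply d_cosh_k. intros; apply K_decr; auto. lra. lra. lra. Qed.

Lemma P3a x y : 0 < x -> 0 < y -> x <> y -> sinhc (sqrt (x * y)) < sqrt (sinhc x * sinhc y).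
Proof. intros Hx Hy Hxy. set (g := sqrt (x*y)).
assert (Hg : 0 < g) by (apply sqrt_lt_R0; nra).
assert (Hg2 : g^2 = x*y) by (apply sq_sqrt; nra).
pose proof (lemL (2*g) (x-y)) as L.
replace ((2*g)^2 + (x-y)^2) with ((x+y)^2) in L by nra.
rewrite sqrt_pow2 in L by lra.
assert (cosh (2*g) + cosh (x-y) < cosh (x+y) + 1) by (apply L; lra).
assert (sinh g ^ 2 < sinh x * sinh y) by (generalize (sinh_double g) (sinh_prod x y); intros; nra).
apply sqrt_lt_of_sq. apply sinhc_pos; auto.
unfold sinhc. replace ((sinh g / g)^2) with (sinh g ^ 2 / (x*y)) by (rewrite <- Hg2; field; lra).
replace (sinh x / x * (sinh y / y)) with (sinh x * sinh y / (x*y)) by (field; lra).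
apply Rmult_lt_compat_r; auto. apply Rinv_0_lt_compat; nra. Qed.

Lemma P3b x y : 0 < x -> 0 < y -> x <> y -> sqrt (sinhc x * sinhc y) < sinhc (sqrt ((x^2+y^2)/2)).
Proof. intros Hx Hy Hxy.
assert (Hm : 0 < sqrt ((x^2+y^2)/2)) by (apply sqrt_lt_R0; nra).
apply sqrt_gt_of_sq. apply sinhc_pos; auto. generalize (sinhc_pos x Hx) (sinhc_pos y Hy); nra.
destruct (Rle_or_lt x y).
- rewrite qm_sym, Rmult_comm. apply (convC_lt sinhc qf). apply d_sinhc. apply sinhc_pos. apply rho_decr. lra.
- apply (convC_lt sinhc qf). apply d_sinhc. apply sinhc_pos. apply rho_decr. lra. Qed.

Lemma P3c x y : 0 < x -> 0 < y -> x <> y -> sinhc (sqrt ((x^2+y^2)/2)) < (sinhc x + sinhc y)/2.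
Proof. intros Hx Hy Hxy. destruct (Rle_or_lt x y).
- rewrite qm_sym. assert (2 * sinhc (sqrt ((y^2+x^2)/2)) < sinhc y + sinhc x).
  apply (convA_lt sinhc qf). apply d_sinhc. apply q_incr. lra. lra.
- assert (2 * sinhc (sqrt ((x^2+y^2)/2)) < sinhc x + sinhc y).
  apply (convA_lt sinhc qf). apply d_sinhc. apply q_incr. lra. lra. Qed.

Lemma P4 Rp x y : Rp < 10 -> 0 < x < sqrt Rp -> 0 < y < sqrt Rp -> x <> y ->
  (sinhc x + sinhc y) / 2 < sinhc (Rmean Rp x y).
Proof. intros HR Hx Hy Hxy. destruct (Rle_or_lt x y).
- assert (sinhc x + sinhc y < 2 * sinhc (Rmean Rp x y)).
  apply (convB_lt sinhc qf). apply d_sinhc. intros; apply L_decr; auto. lra. lra. lra.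
- rewrite rmean_sym. assert (sinhc y + sinhc x < 2 * sinhc (Rmean Rp y x)).
  apply (convB_lt sinhc qf). apply d_sinhc. intros; apply L_decr; auto. lra. lra. lra. Qed.

Theorem corollary3p8 :
  (* (1) *)
  (forall x y : R, 0 < x -> 0 < y ->
     cosh (sqrt (x * y)) <= sqrt (cosh x * cosh y) /\
     sqrt (cosh x * cosh y) <= cosh (sqrt ((x ^ 2 + y ^ 2) / 2)) /\
     cosh (sqrt ((x ^ 2 + y ^ 2) / 2)) <= (cosh x + cosh y) / 2 /\
     (cosh (sqrt (x * y)) = sqrt (cosh x * cosh y) <-> x = y) /\
     (sqrt (cosh x * cosh y) = cosh (sqrt ((x ^ 2 + y ^ 2) / 2)) <-> x = y) /\
     (cosh (sqrt ((x ^ 2 + y ^ 2) / 2)) = (cosh x + cosh y) / 2 <-> x = y)) /\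
  (* (2) *)
  (forall Rp x y : R, 0 < Rp < 6 ->
     0 < x < sqrt Rp -> 0 < y < sqrt Rp ->
     (cosh x + cosh y) / 2 <= cosh (Rmean Rp x y) /\
     ((cosh x + cosh y) / 2 = cosh (Rmean Rp x y) <-> x = y)) /\
  (* (3) *)
  (forall x y : R, 0 < x -> 0 < y ->
     sinhc (sqrt (x * y)) <= sqrt (sinhc x * sinhc y) /\
     sqrt (sinhc x * sinhc y) <= sinhc (sqrt ((x ^ 2 + y ^ 2) / 2)) /\
     sinhc (sqrt ((x ^ 2 + y ^ 2) / 2)) <= (sinhc x + sinhc y) / 2 /\
     (sinhc (sqrt (x * y)) = sqrt (sinhc x * sinhc y) <-> x = y) /\
     (sqrt (sinhc x * sinhc y) = sinhc (sqrt ((x ^ 2 + y ^ 2) / 2)) <-> x = y) /\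
     (sinhc (sqrt ((x ^ 2 + y ^ 2) / 2)) = (sinhc x + sinhc y) / 2 <-> x = y)) /\
  (* (4) *)
  (forall Rp x y : R, 0 < Rp < 10 ->
     0 < x < sqrt Rp -> 0 < y < sqrt Rp ->
     (sinhc x + sinhc y) / 2 <= sinhc (Rmean Rp x y) /\
     ((sinhc x + sinhc y) / 2 = sinhc (Rmean Rp x y) <-> x = y)).
Proof.
split; [|split; [|split]].
- intros x y Hx Hy.
  destruct (wrap (cosh (sqrt (x * y))) (sqrt (cosh x * cosh y)) x y) as [A1 A2].
  { apply P1a; auto. }
  { intros <-. rewrite gm_eq, sqrt_square; auto. left; apply cosh_pos. }
  destruct (wrap (sqrt (cosh x * cosh y)) (cosh (sqrt ((x ^ 2 + y ^ 2) / 2))) x y) as [B1 B2].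
  { apply P1b; auto. }
  { intros <-. rewrite qm_eq, sqrt_square; auto. left; apply cosh_pos. }
  destruct (wrap (cosh (sqrt ((x ^ 2 + y ^ 2) / 2))) ((cosh x + cosh y) / 2) x y) as [C1 C2].
  { apply P1c; auto. }
  { intros <-. rewrite qm_eq; auto. field. }
  tauto.
- intros Rp x y HR Hx Hy.
  apply wrap. apply P2; lra.
  intros <-. rewrite rmean_eq; auto. field.
- intros x y Hx Hy.
  destruct (wrap (sinhc (sqrt (x * y))) (sqrt (sinhc x * sinhc y)) x y) as [A1 A2].
  { apply P3a; auto. }
  { intros <-. rewrite gm_eq, sqrt_square; auto. left; apply sinhc_pos; auto. }
  destruct (wrap (sqrt (sinhc x * sinhc y)) (sinhc (sqrt ((x ^ 2 + y ^ 2) / 2))) x y) as [B1 B2].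
  { apply P3b; auto. }
  { intros <-. rewrite qm_eq, sqrt_square; auto. left; apply sinhc_pos; auto. }
  destruct (wrap (sinhc (sqrt ((x ^ 2 + y ^ 2) / 2))) ((sinhc x + sinhc y) / 2) x y) as [C1 C2].
  { apply P3c; auto. }
  { intros <-. rewrite qm_eq; auto. field. }
  tauto.
- intros Rp x y HR Hx Hy.
  apply wrap. apply P4; lra.
  intros <-. rewrite rmean_eq; auto. field.
Qed.
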